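(* Let $k\subset K$ be differential fields of characteristic zero with the same field of constants $C$, assumed algebraically closed, and assume there is $x\in k$ with $x'=1$. Let $f,g\in K$ be iterated integrals over $k$. If $f$ and $g$ are algebraically dependent over $k$, then there exist $u,v\in k$, not both zero, such that $uf+vg\in k$.
   Context: An element $f\in K$ is an iterated integral over $k$ if $f^{(m)}\in k$ for some $m\in\mathbb{N}$. Here $k$ need not be algebraically closed. *)

(* Defs.v *)
From HB Require Import structures.
From mathcomp Require Import all_boot all_order all_algebra.
Set Implicit Arguments. Unset Strict Implicit. Unset Printing Implicit Defensive.
Import Order.TTheory GRing.Theory Num.Theory.
Local Open Scope ring_scope.

Definition is_derivation (K : fieldType) (D : K -> K) : Prop :=
  (forall a b, D (a + b) = D a + D b) /\
  (forall a b, D (a * b) = D a * b + a * D b).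

Definition char0 (K : fieldType) : Prop := forall n : nat, (n.+1)%:R != 0 :> K.

Definition is_diff_subfield (K : fieldType) (D : K -> K) (k : pred K) : Prop :=
  [/\ 0 \in k, 1 \in k &
      (forall a b, a \in k -> b \in k -> a + b \in k)] /\
  [/\
      (forall a, a \in k -> - a \in k),
      (forall a b, a \in k -> b \in k -> a * b \in k),
      (forall a, a \in k -> a^-1 \in k) &
      (forall a, a \in k -> D a \in k)].

Definition is_const (K : fieldType) (D : K -> K) (c : K) : Prop := D c = 0.

Definition consts_alg_closed (K : fieldType) (D : K -> K) : Prop :=
  forall p : {poly K}, (forall i, is_const D p`_i) -> (1 < size p)%N ->
    exists c, is_const D c /\ root p c.

Definition iterated_integral (K : fieldType) (D : K -> K) (k : pred K) (f : K) : Prop :=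
  exists m : nat, iter m D f \in k.

(* f and g are algebraically dependent over k: some nonzero P in k[X,Y]
   (represented in {poly {poly K}} with all coefficients in k) has P(f,g)=0,
   where the inner variable is X (evaluated at f) and the outer one Y (at g). *)
Definition alg_dependent2 (K : fieldType) (k : pred K) (f g : K) : Prop :=
  exists P : {poly {poly K}},
    [/\ P != 0, (forall i j, (P`_i)`_j \in k) & (P.[g%:P]).[f] = 0].

(* Main.v *)
Require Import Defs.
From HB Require Import structures.
From mathcomp Require Import all_boot all_order all_algebra.
From Stdlib Require Import Classical.
From mathcomp Require Import ring zify.
Set Implicit Arguments. Unset Strict Implicit. Unset Printing Implicit Defensive.
Import Order.TTheory GRing.Theory Num.Theory.
Local Open Scope ring_scope.

Record rset (R : comNzRingType) (E : R -> Prop) : Prop := RSet {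
  rs0 : E 0; rs1 : E 1;
  rsD : forall a b, E a -> E b -> E (a + b);
  rsN : forall a, E a -> E (- a);
  rsM : forall a b, E a -> E b -> E (a * b) }.

Section RSet.
Variable R : comNzRingType.

Variable E : R -> Prop.
Hypothesis hE : rset E.

Lemma rsB a b : E a -> E b -> E (a - b).
Proof. by move=> ha hb; apply: (rsD hE) => //; apply: (rsN hE). Qed.

Lemma rs_sum (I : Type) (r : seq I) (P : pred I) (F : I -> R) :
  (forall i, P i -> E (F i)) -> E (\sum_(i <- r | P i) F i).
Proof. move=> h; elim/big_ind: _ => //; [exact: rs0 hE | exact: rsD hE]. Qed.

Lemma rs_nat n : E n%:R.
Proof. elim: n => [|n IH]; first exact: rs0 hE. by rewrite -addn1 natrD; apply: (rsD hE) => //; apply: (rs1 hE). Qed.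

Lemma rs_muln a n : E a -> E (a *+ n).
Proof. by move=> ha; rewrite -mulr_natr; apply: (rsM hE) => //; apply: rs_nat. Qed.

Lemma rs_exp a n : E a -> E (a ^+ n).
Proof. move=> ha; elim: n => [|n IH]; first by rewrite expr0; apply: rs1 hE.
  by rewrite exprS; apply: (rsM hE). Qed.

End RSet.

Definition polyIn (R : comNzRingType) (E : R -> Prop) (p : {poly R}) := forall i, E p`_i.

Section PolyIn.
Variable R : comNzRingType.
Variable E : R -> Prop.
Hypothesis hE : rset E.

Lemma polyIn_C c : E c -> polyIn E c%:P.
Proof. by move=> hc i; rewrite coefC; case: (i == 0)%N => //; apply: rs0 hE. Qed.
Lemma polyIn_X : polyIn E 'X.
Proof. move=> i; rewrite coefX; case: (i == 1)%N; [exact: rs1 hE | exact: rs0 hE]. Qed.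

Lemma polyIn_rset : rset (polyIn E).
Proof. split.
- by move=> i; rewrite coef0; apply: rs0 hE.
- by apply: polyIn_C; apply: rs1 hE.
- by move=> p q hp hq i; rewrite coefD; apply: (rsD hE).
- by move=> p hp i; rewrite coefN; apply: (rsN hE).
- move=> p q hp hq i; rewrite coefM; apply: (rs_sum hE) => j _; apply: (rsM hE) => //.
Qed.

Lemma polyInZ a p : E a -> polyIn E p -> polyIn E (a *: p).
Proof. by move=> ha hp i; rewrite coefZ; apply: (rsM hE). Qed.

Lemma polyIn_deriv p : polyIn E p -> polyIn E p^`().
Proof. by move=> hp i; rewrite coef_deriv; apply: (rs_muln hE). Qed.

Lemma polyIn_horner p y : polyIn E p -> E y -> E p.[y].
Proof. move=> hp hy; rewrite horner_coef; apply: (rs_sum hE) => i _.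
  by apply: (rsM hE) => //; apply: (rs_exp hE). Qed.

Lemma polyIn_comp p q : polyIn E p -> polyIn E q -> polyIn E (p \Po q).
Proof. move=> hp hq; rewrite comp_polyE; apply: (rs_sum (polyIn_rset)) => i _.
  by apply: polyInZ => //; apply: (rs_exp (polyIn_rset)). Qed.

Lemma polyIn_lead p : polyIn E p -> E (lead_coef p).
Proof. by move=> hp; apply: hp. Qed.

End PolyIn.

Lemma polyIn_map (R S : comNzRingType) (E : R -> Prop) (F : S -> Prop) (f : R -> S) p :
  f 0 = 0 -> (forall a, E a -> F (f a)) -> polyIn E p -> polyIn F (map_poly f p).
Proof. by move=> f0 hf hp i; rewrite coef_map_id0 //; apply: hf. Qed.

Lemma polyIn_sub (R : comNzRingType) (E F : R -> Prop) p :
  (forall a, E a -> F a) -> polyIn E p -> polyIn F p.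
Proof. by move=> h hp i; apply: h. Qed.
Section Deriv.
Variables (K : fieldType) (D : K -> K).
Hypothesis hD : is_derivation D.

Lemma DD a b : D (a + b) = D a + D b. Proof. exact: hD.1. Qed.
Lemma DM a b : D (a * b) = D a * b + a * D b. Proof. exact: hD.2. Qed.
Lemma D0 : D 0 = 0.
Proof. have := DD 0 0; rewrite addr0 => /eqP; rewrite -subr_eq0 => /eqP.
  by rewrite opprD addrA subrr sub0r => /eqP; rewrite oppr_eq0 => /eqP. Qed.
Lemma D1 : D 1 = 0.
Proof. have := DM 1 1; rewrite !mulr1 mul1r => /eqP; rewrite -subr_eq0 => /eqP.
  by rewrite opprD addrA subrr sub0r => /eqP; rewrite oppr_eq0 => /eqP. Qed.
Lemma DN a : D (- a) = - D a.
Proof. apply/eqP; rewrite -subr_eq0 opprK -DD addNr D0 //. Qed.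
Lemma DB a b : D (a - b) = D a - D b. Proof. by rewrite DD DN. Qed.
Lemma Dnat n : D n%:R = 0.
Proof. elim: n => [|n IH]; first by rewrite D0. by rewrite -addn1 natrD DD IH D1 addr0. Qed.
Lemma Dsum (I : Type) (r : seq I) (P : pred I) (F : I -> K) :
  D (\sum_(i <- r | P i) F i) = \sum_(i <- r | P i) D (F i).
Proof. elim: r => [|i r IH]; first by rewrite !big_nil D0.
  rewrite !big_cons; case: (P i) => //. by rewrite DD IH. Qed.
Lemma DcM c a : D c = 0 -> D (c * a) = c * D a.
Proof. by move=> h; rewrite DM h mul0r add0r. Qed.
Lemma DMc c a : D c = 0 -> D (a * c) = D a * c.
Proof. by move=> h; rewrite DM h mulr0 addr0. Qed.
Lemma DX a n : D (a ^+ n.+1) = n.+1%:R * a ^+ n * D a.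
Proof. elim: n => [|n IH]; first by rewrite expr1 expr0 mulr1 mul1r.
  rewrite exprS DM IH. have -> : n.+2%:R = n.+1%:R + 1 :> K by rewrite -addn1 natrD.
  rewrite exprS. ring. Qed.
Lemma DV a : a != 0 -> D (a^-1) = - D a / (a * a).
Proof. move=> a0. have := DM a a^-1; rewrite mulfV // D1 => /esym /eqP.
  rewrite addr_eq0 => /eqP h. apply: (mulfI a0).
  have -> : a * D a^-1 = - (D a / a) by rewrite h opprK.
  field. done. Qed.
Lemma Ddiv a b : b != 0 -> D (a / b) = (D a * b - a * D b) / (b * b).
Proof. move=> b0; rewrite DM DV //. field. done. Qed.

Definition delta (b : K) (p : {poly K}) := map_poly D p + b *: p^`().

Lemma map_MXaddC (p : {poly K}) c :
  map_poly D (p * 'X + c%:P) = map_poly D p * 'X + (D c)%:P.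
Proof. apply/polyP => i. rewrite coef_map_id0 ?D0 // !coefD !coefMX !coefC.
  case: i => [|i] /=; first by rewrite !add0r. by rewrite coef_map_id0 ?D0 // !addr0. Qed.

Lemma D_horner (p : {poly K}) y : D p.[y] = (delta (D y) p).[y].
Proof. rewrite /delta. elim/poly_ind: p => [|p c IH].
  by rewrite horner0 D0 map_poly0 deriv0 scaler0 addr0 horner0.
  rewrite map_MXaddC derivMXaddC hornerMXaddC DD DM IH.
  rewrite !hornerE /=. ring. Qed.

Hypothesis hchar : char0 K.

Lemma natr_neq0 n : n.+1%:R != 0 :> K. Proof. exact: hchar. Qed.

Record dfield (E : K -> Prop) : Prop := DF {
  df_rs : rset E;
  dfV : forall a, E a -> E a^-1;
  dfDer : forall a, E a -> E (D a);
  dfC : forall c, D c = 0 -> E c }.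

Definition alg (E : K -> Prop) y := exists p : {poly K}, [/\ p != 0, polyIn E p & p.[y] = 0].

Lemma coef_delta b (q : {poly K}) i : (delta b q)`_i = D q`_i + b * (q`_i.+1 *+ i.+1).
Proof. by rewrite /delta coefD coef_map_id0 ?D0 // coefZ coef_deriv. Qed.

Lemma polyIn_delta E b q : dfield E -> E b -> polyIn E q -> polyIn E (delta b q).
Proof. move=> hE hb hq. have R := df_rs hE. apply: (rsD (polyIn_rset R)).
  - by apply: polyIn_map; [exact: D0 | exact: dfDer hE |].
  - by apply: (polyInZ R) => //; apply: (polyIn_deriv R). Qed.

Lemma O1 E y : dfield E -> E (D y) -> alg E y -> E y.
Proof.
move=> hE hy [p [p0 hp py]]. have R := df_rs hE.
move: {2}(size p) (leqnn (size p)) => n; elim: n p p0 hp py => [|n IH] p p0 hp py hs.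
  by move: hs; rewrite leqn0 size_poly_eq0 (negbTE p0).
set q := (lead_coef p)^-1 *: p.
have l0 : lead_coef p != 0 by rewrite lead_coef_eq0.
have sq : size q = size p by rewrite size_scale // invr_eq0.
have lq : lead_coef q = 1 by rewrite lead_coefZ mulVf.
have hq : polyIn E q by apply: (polyInZ R) => //; apply: (dfV hE); apply: hp.
have qy : q.[y] = 0 by rewrite hornerZ py mulr0.
set r := delta (D y) q.
have hr : polyIn E r by apply: polyIn_delta.
have ry : r.[y] = 0 by rewrite -D_horner qy D0.
have s2 : (1 < size q)%N.
  rewrite ltnNge; apply/negP => h1.
  have : lead_coef q = q.[y] by rewrite [in LHS](size1_polyC h1) [in RHS](size1_polyC h1) hornerC lead_coefC.
  by rewrite lq qy => /eqP; rewrite oner_eq0.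
have sr : (size r <= (size q).-1)%N.
  apply/leq_sizeP => j hj. rewrite coef_delta.
  case: (ltngtP j (size q).-1) hj => // [hlt|heq] _.
  - have h1 : (size q <= j)%N by rewrite -(prednK (ltnW s2)).
    rewrite !(leq_sizeP _ _ (leqnn (size q))) //; first by rewrite D0 mul0rn mulr0 addr0.
    exact: leq_trans h1 (leqnSn _).
  - rewrite heq -lead_coefE lq D1 add0r.
    by rewrite (leq_sizeP _ _ (leqnn (size q))) ?mul0rn ?mulr0 // prednK // ltnW.
have [r0|rn0] := eqVneq r 0; last first.
  apply: (IH r rn0 hr ry). rewrite -ltnS. apply: leq_trans hs.
  rewrite -sq. apply: leq_ltn_trans sr _. by rewrite prednK ?leqnn // ltnW.
(* r = 0 : use coefficient (size q).-2 *)
move: s2. case Eq: (size q) => [|[|s]] // _.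
have : r`_s = 0 by rewrite r0 coef0.
rewrite coef_delta.
have -> : q`_s.+1 = 1 by move: lq; rewrite lead_coefE Eq.
move=> h.
set c := y + q`_s / s.+1%:R.
have dc : D c = 0.
  rewrite /c DD DMc; last by rewrite DV ?natr_neq0 // Dnat oppr0 mul0r.
  have -> : D q`_s = - (D y * s.+1%:R) by apply/eqP; rewrite -addr_eq0 h.
  field. by rewrite nat1r natr_neq0.
suff : E (c - q`_s / s.+1%:R) by rewrite /c addrK.
apply: (rsB R); first exact: (dfC hE).
apply: (rsM R); first exact: hq. apply: (dfV hE); exact: (rs_nat R).
Qed.


Definition adj (E : K -> Prop) (Y : K) (z : K) :=
  exists p q : {poly K}, [/\ polyIn E p, polyIn E q, q.[Y] != 0 & z = p.[Y] / q.[Y]].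

Section Adj.
Variables (E : K -> Prop) (Y : K).
Hypothesis hE : dfield E.
Hypothesis hY : E (D Y).
Let R := df_rs hE.
Let PR := polyIn_rset R.

Lemma adj_sub z : E z -> adj E Y z.
Proof. move=> hz; exists z%:P, 1; split.
  - exact: polyIn_C. - exact: (rs1 PR). - by rewrite hornerC oner_eq0.
  - by rewrite !hornerC divr1. Qed.

Lemma adj_Y : adj E Y Y.
Proof. exists 'X, 1; split.
  - exact: polyIn_X. - exact: (rs1 PR). - by rewrite hornerC oner_eq0.
  - by rewrite hornerX hornerC divr1. Qed.

Lemma adj_dfield : dfield (adj E Y).
Proof. split; first split.
- by apply: adj_sub; apply: (rs0 R).
- by apply: adj_sub; apply: (rs1 R).
- move=> a b [p1 [q1 [h1 h2 h3 ->]]] [p2 [q2 [h4 h5 h6 ->]]].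
  exists (p1 * q2 + p2 * q1), (q1 * q2); split.
  + by apply: (rsD PR); apply: (rsM PR).
  + by apply: (rsM PR).
  + by rewrite hornerM mulf_neq0.
  + rewrite hornerD !hornerM. field. by apply/andP.
- move=> a [p [q [h1 h2 h3 ->]]]. exists (- p), q; split => //.
  + by apply: (rsN PR). + by rewrite hornerN mulNr.
- move=> a b [p1 [q1 [h1 h2 h3 ->]]] [p2 [q2 [h4 h5 h6 ->]]].
  exists (p1 * p2), (q1 * q2); split.
  + by apply: (rsM PR). + by apply: (rsM PR).
  + by rewrite hornerM mulf_neq0.
  + rewrite !hornerM. field. by apply/andP.
- move=> a [p [q [h1 h2 h3 ->]]]. have [p0|p0] := eqVneq p.[Y] 0.
  + by rewrite p0 mul0r invr0; apply: adj_sub; apply: (rs0 R).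
  + exists q, p; split => //. by rewrite invf_div.
- move=> a [p [q [h1 h2 h3 ->]]].
  exists (delta (D Y) p * q - p * delta (D Y) q), (q * q); split.
  + apply: (rsB PR); apply: (rsM PR) => //; exact: polyIn_delta.
  + by apply: (rsM PR).
  + by rewrite hornerM mulf_neq0.
  + by rewrite Ddiv // hornerD hornerN !hornerM -!D_horner.
- by move=> c hc; apply: adj_sub; apply: (dfC hE).
Qed.

End Adj.


Lemma size_sub_lead (p r : {poly K}) : p != 0 -> size r = size p ->
  lead_coef r = lead_coef p -> (size (p - r)%R < size p)%N.
Proof. move=> p0 sr lr. have sp : (0 < size p)%N by rewrite size_poly_gt0.
  rewrite -(prednK sp) ltnS. apply/leq_sizeP => j hj. rewrite coefB.
  case: (ltngtP j (size p).-1) hj => // [hlt|->] _.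
  - have hj : (size p <= j)%N by rewrite -(prednK sp).
    rewrite !(leq_sizeP _ _ (leqnn _)) ?subr0 // sr //.
  - by move: lr; rewrite !lead_coefE sr => ->; rewrite subrr. Qed.

Lemma pdiv E (p q : {poly K}) : dfield E -> polyIn E p -> polyIn E q -> q != 0 ->
  exists s r, [/\ polyIn E s, polyIn E r, p = s * q + r & (size r < size q)%N].
Proof.
move=> hE hp hq q0. have R := df_rs hE. have PR := polyIn_rset R.
move: {2}(size p) (leqnn (size p)) => n; elim: n p hp => [|n IH] p hp hs.
  exists 0, p; split => //; first exact: (rs0 PR). by rewrite mul0r add0r.
  move: hs; rewrite leqn0 => /eqP ->; by rewrite size_poly_gt0.
have [lt|ge] := ltnP (size p) (size q).
  exists 0, p; split => //; first exact: (rs0 PR). by rewrite mul0r add0r.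
have p0 : p != 0 by rewrite -size_poly_gt0; apply: leq_trans ge; rewrite size_poly_gt0.
have lq0 : lead_coef q != 0 by rewrite lead_coef_eq0.
set c := lead_coef p / lead_coef q.
set d := (size p - size q)%N.
set t := c *: (q * 'X^d).
have ht : polyIn E t.
  apply: (polyInZ R); first by apply: (rsM R); [apply: hp | apply: (dfV hE); apply: hq].
  by apply: (rsM PR) => //; apply: (rs_exp PR); apply: polyIn_X.
have c0 : c != 0 by rewrite mulf_neq0 // ?invr_eq0 // lead_coef_eq0.
have st : size t = size p by rewrite size_scale // size_mulXn // /d; rewrite subnK. 
have lt : lead_coef t = lead_coef p.
  by rewrite lead_coefZ lead_coefM lead_coefXn mulr1 /c divfK.
have hp1 : polyIn E (p - t) by apply: (rsB PR).
have := size_sub_lead p0 st lt => hs1.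
have [s [r [hs1' hr e sr]]] := IH (p - t) hp1 (leq_trans (leq_trans hs1 hs) (leqnn _)).
exists (s + c *: 'X^d), r; split => //.
  apply: (rsD PR) => //; apply: (polyInZ R); first by apply: (rsM R); [apply: hp | apply: (dfV hE); apply: hq].
  by apply: (rs_exp PR); apply: polyIn_X.
rewrite mulrDl addrAC -e /t. rewrite -scalerAl mulrC. by rewrite subrK.
Qed.


Lemma size_delta b (h : {poly K}) : (size (delta b h) <= size h)%N.
Proof. apply/leq_sizeP => j hj. rewrite coef_delta !(leq_sizeP _ _ (leqnn _)) //.
  - by rewrite D0 mul0rn mulr0 addr0.
  - exact: leq_trans hj (leqnSn _). Qed.

Section StructR.
Variables (E : K -> Prop) (Y : K).
Hypothesis hE : dfield E.
Hypothesis hY : E (D Y).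
Hypothesis nY : ~ E Y.
Let R := df_rs hE.
Let PR := polyIn_rset R.

Lemma transc p : polyIn E p -> p.[Y] = 0 -> p = 0.
Proof. move=> hp py. apply/eqP/negPn/negP => p0. apply: nY. apply: O1 => //. by exists p. Qed.

Lemma poly_int_affine s a : polyIn E s -> delta (D Y) s = a%:P ->
  exists s0 s1, [/\ E s0, D s1 = 0 & s.[Y] = s0 + s1 * Y].
Proof.
move=> hs ds.
have cf j : (0 < j)%N -> D s`_j + D Y * (s`_j.+1 *+ j.+1) = 0.
  by move=> j0; rewrite -coef_delta ds coefC; case: j j0.
have s2 : (size s <= 2)%N.
  rewrite leqNgt; apply/negP => h3.
  move: (h3); case Es: (size s) => [|[|[|e]]] // _.
  have le : s`_e.+2 != 0.
    by have := lead_coef_eq0 s; rewrite lead_coefE Es /= => ->; rewrite -size_poly_gt0 Es.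
  have c2 : D s`_e.+2 = 0.
    have z : s`_e.+3 = 0 by apply: (leq_sizeP _ _ (leqnn (size s))); rewrite Es.
    by have := cf e.+2 isT; rewrite z mul0rn mulr0 addr0.
  have c1 := cf e.+1 isT.
  set w := Y + s`_e.+1 / (s`_e.+2 * e.+2%:R).
  have dw : D w = 0.
    rewrite /w DD DMc; last first.
      by rewrite DV ?mulf_neq0 ?natr_neq0 // DMc ?Dnat // c2 mul0r oppr0 mul0r.
    have -> : D s`_e.+1 = - (D Y * (s`_e.+2 *+ e.+2)) by apply/eqP; rewrite -addr_eq0 c1.
    rewrite -mulr_natr. field. by rewrite le andbT -natrD; apply: (natr_neq0 e.+1).
  apply: nY. suff : E (w - s`_e.+1 / (s`_e.+2 * e.+2%:R)) by rewrite /w addrK.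
  apply: (rsB R); first exact: (dfC hE).
  apply: (rsM R); first exact: hs. apply: (dfV hE). apply: (rsM R); first exact: hs.
  exact: (rs_nat R).
exists s`_0, s`_1; split; first exact: hs.
  have z2 : s`_2 = 0 by apply: (leq_sizeP _ _ s2).
  by have := cf 1%N isT; rewrite z2 mul0rn mulr0 addr0.
rewrite (horner_coef_wide _ s2) big_ord_recl big_ord1 /= expr0 mulr1 expr1.
by rewrite /bump /=.
Qed.


Lemma structR z : adj E Y z -> E (D z) ->
  exists c e, [/\ D c = 0, E e & z = e + c * Y].
Proof.
case=> p [q [hp hq qY ->]] hz.
have q0 : q != 0 by apply: contraNneq qY => ->; rewrite horner0.
have [s [r [hs hr ep sr]]] := pdiv hE hp hq q0.
set a := D (p.[Y] / q.[Y]).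
set A := a%:P - delta (D Y) s.
set B := delta (D Y) r * q - r * delta (D Y) q.
have hA : polyIn E A by apply: (rsB PR); [apply: polyIn_C | apply: polyIn_delta].
have hB : polyIn E B.
  by apply: (rsB PR); apply: (rsM PR) => //; apply: polyIn_delta.
have hL : polyIn E (A * (q * q) - B) by apply: (rsB PR) => //; apply: (rsM PR) => //; apply: (rsM PR).
have LY : (A * (q * q) - B).[Y] = 0.
  have e1 : p.[Y] / q.[Y] = s.[Y] + r.[Y] / q.[Y].
    by rewrite ep hornerD hornerM; field.
  have e2 : a = (delta (D Y) s).[Y] + ((delta (D Y) r).[Y] * q.[Y] - r.[Y] * (delta (D Y) q).[Y]) / (q.[Y] * q.[Y]).
    by rewrite /a e1 DD Ddiv // -!D_horner.
  rewrite /A /B. move: (delta (D Y) s) (delta (D Y) r) (delta (D Y) q) e2 => ds dr dq e2.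
  rewrite !(hornerD, hornerN, hornerM) hornerC e2. field. done.
have L0 := transc hL LY.
have key : delta (D Y) s = a%:P.
  apply/eqP; rewrite eq_sym -subr_eq0; apply/negPn/negP => A0.
  move/eqP: L0; rewrite subr_eq0 => /eqP L0.
  have qq0 : q * q != 0 by rewrite mulf_neq0.
  have s1 := size_mul A0 qq0. have s2 := size_mul q0 q0.
  have s3 : (size B <= (size r + size q).-1)%N.
    apply: leq_trans (size_polyD _ _) _. rewrite size_polyN geq_max; apply/andP; split.
    - apply: leq_trans (size_polyMleq _ _) _. have := size_delta (D Y) r => h; rewrite -!subn1 leq_sub2r // leq_add2r //.
    - apply: leq_trans (size_polyMleq _ _) _. have := size_delta (D Y) q => h; rewrite -!subn1 leq_sub2r // leq_add2l //.
  have sA : (0 < size (a%:P - delta (D Y) s)%R)%N by rewrite size_poly_gt0.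
  have sq : (0 < size q)%N by rewrite size_poly_gt0.
  move: s3; rewrite -L0 s1 s2. move: sA sq sr; move: (size (a%:P - delta (D Y) s)%R) (size q) (size r) => x y w. lia.
have [s0 [s1 [h0 h1 h2]]] := poly_int_affine hs key.
have dc : D (p.[Y] / q.[Y] - s.[Y]) = 0 by rewrite DB D_horner key hornerC subrr.
exists s1, (p.[Y] / q.[Y] - s.[Y] + s0); split => //.
  by apply: (rsD R) => //; apply: (dfC hE).
by rewrite -addrA -h2 subrK.
Qed.

End StructR.


Lemma natr_inj i j : i%:R = j%:R :> K -> i = j.
Proof.
wlog h : i j / (i <= j)%N.
  move=> W e. case: (leqP i j) => hij; first exact: W. by apply/esym/W => //; apply: ltnW.
move=> e. apply/eqP; rewrite eqn_leq h /=. rewrite leqNgt; apply/negP => lt.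
have := natr_neq0 (j - i).-1. rewrite prednK ?subn_gt0 // natrB ?(ltnW lt) // e subrr.
by rewrite eqxx.
Qed.

Lemma exists_nonroot (q : {poly K}) : q != 0 -> exists n : nat, q.[n%:R] != 0.
Proof.
move=> q0. apply: NNPP => hn. apply: (negP q0); apply/eqP.
apply: (@roots_geq_poly_eq0 _ _ [seq i%:R | i <- iota 0 (size q)]).
- apply/allP => x /mapP [i _ ->]. rewrite /root. apply/negPn/negP => h. apply: hn. by exists i.
- rewrite map_inj_uniq ?iota_uniq //. exact: natr_inj.
- by rewrite size_map size_iota.
Qed.

Lemma exists_n_map (P : {poly {poly K}}) : P != 0 ->
  exists n : nat, map_poly (horner_eval n%:R) P != 0.
Proof.
move=> P0. have l0 : lead_coef P != 0 by rewrite lead_coef_eq0.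
have [n hn] := exists_nonroot l0. exists n.
apply: contra hn => /eqP h. have := congr1 (fun u : {poly K} => u`_(size P).-1) h.
rewrite coef_map /= coef0 -lead_coefE horner_evalE => ->; exact: eqxx.
Qed.

Lemma exists_n_horner (P : {poly {poly K}}) : P != 0 ->
  exists n : nat, P.[(n%:R)%:P] != 0.
Proof.
move=> P0. have S0 : swapXY P != 0 by rewrite swapXY_eq0.
have [n hn] := exists_n_map S0. exists n. by rewrite horner_polyC.
Qed.

Lemma eval2 (P : {poly {poly K}}) y s : (P.[y%:P]).[s] = (map_poly (horner_eval s) P).[y].
Proof. have h := horner_map (horner_eval s) P y%:P. move: h => /= h. rewrite /horner_eval /= in h *. rewrite hornerC in h. by rewrite h. Qed.


Lemma evalPhi (P : {poly {poly K}}) L1 L2 t :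
  ((map_poly (comp_poly L1) P).[L2]).[t] = (P.[(L2.[t])%:P]).[L1.[t]].
Proof.
rewrite eval2. have h := horner_map (horner_eval t) (map_poly (comp_poly L1) P) L2.
move: h => /= h. rewrite /horner_eval /= in h *. rewrite -h.
rewrite -map_poly_comp_id0 ?comp_poly0 ?horner0 //. congr horner.
apply: eq_map_poly => c /=. by rewrite horner_comp.
Qed.


Section Tower.
Variable kE : K -> Prop.
Hypothesis hk : dfield kE.

Fixpoint Etow (Bs : seq K) : K -> Prop :=
  if Bs is Y :: Bs' then adj (Etow Bs') Y else kE.
Fixpoint tower_ok (Bs : seq K) : Prop :=
  if Bs is Y :: Bs' then [/\ tower_ok Bs', kE (D Y) & ~ Etow Bs' Y] else True.
Fixpoint Aff (Bs : seq K) (z : K) : Prop :=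
  if Bs is Y :: Bs' then exists c, kE c /\ Aff Bs' (z - c * Y) else kE z.

Lemma Etow_props Bs : tower_ok Bs -> dfield (Etow Bs) /\ (forall z, kE z -> Etow Bs z).
Proof.
elim: Bs => [|Y Bs IH] /=; first by split.
case=> /IH [h1 h2] hY nY. split; first exact: (adj_dfield h1 (h2 _ hY)).
by move=> z hz; exact: (adj_sub Y h1 (h2 _ hz)).
Qed.

Lemma Etow_df Bs : tower_ok Bs -> dfield (Etow Bs). Proof. by case/Etow_props. Qed.
Lemma Etow_k Bs z : tower_ok Bs -> kE z -> Etow Bs z. Proof. by case/Etow_props => _; apply. Qed.

Lemma Aff_k Bs z : kE z -> Aff Bs z.
Proof. elim: Bs z => [|Y Bs IH] z hz //=. exists 0; split; first exact: (rs0 (df_rs hk)).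
  by rewrite mul0r subr0; apply: IH. Qed.

Lemma Aff_D Bs u v : Aff Bs u -> Aff Bs v -> Aff Bs (u + v).
Proof. elim: Bs u v => [|Y Bs IH] u v /=; first exact: (rsD (df_rs hk)).
  move=> [c [hc hu]] [d [hd hv]]. exists (c + d); split; first exact: (rsD (df_rs hk)).
  have -> : u + v - (c + d) * Y = (u - c * Y) + (v - d * Y) by ring.
  exact: IH. Qed.

Lemma Aff_M Bs a u : kE a -> Aff Bs u -> Aff Bs (a * u).
Proof. elim: Bs u => [|Y Bs IH] u ha /=; first exact: (rsM (df_rs hk)).
  move=> [c [hc hu]]. exists (a * c); split; first exact: (rsM (df_rs hk)).
  have -> : a * u - a * c * Y = a * (u - c * Y) by ring.
  exact: IH. Qed.

Lemma Aff_B Bs u v : Aff Bs u -> Aff Bs v -> Aff Bs (u - v).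
Proof. move=> hu hv. apply: Aff_D => //. rewrite -mulN1r. apply: Aff_M => //.
  apply: (rsN (df_rs hk)); exact: (rs1 (df_rs hk)). Qed.

Lemma Aff_Etow Bs z : tower_ok Bs -> Aff Bs z -> Etow Bs z.
Proof.
elim: Bs z => [|Y Bs IH] z //=. case=> hBs hY nY [c [hc hz]].
have hE := Etow_df hBs.
have hA := @adj_dfield (Etow Bs) Y hE (Etow_k hBs hY). have R := df_rs hA.
have -> : z = (z - c * Y) + c * Y by rewrite subrK.
apply: (rsD R); first by apply: (adj_sub Y hE); apply: IH.
apply: (rsM R); last exact: adj_Y.
by apply: (adj_sub Y hE); apply: Etow_k.
Qed.

Lemma structR_iter Bs J : tower_ok Bs -> Etow Bs J -> kE (D J) -> Aff Bs J.
Proof.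
elim: Bs J => [|Y Bs IH] J //=. case=> hBs hY nY hJ dJ.
have hE := Etow_df hBs.
have [c [e [dc he eJ]]] := structR hE (Etow_k hBs hY) nY hJ (Etow_k hBs dJ).
exists c; split; first exact: (dfC hk).
rewrite eJ addrK. apply: IH => //.
have : D e = D (e + c * Y) - c * D Y by rewrite DD DcM // addrK.
move=> ->. rewrite -eJ. apply: (rsB (df_rs hk)) => //. apply: (rsM (df_rs hk)) => //. exact: (dfC hk).
Qed.

Lemma Aff_cons Bs Y z : Aff Bs z -> Aff (Y :: Bs) z.
Proof. move=> h /=. exists 0; split; first exact: (rs0 (df_rs hk)). by rewrite mul0r subr0. Qed.

Lemma clean (Js : seq K) : (forall J, J \in Js -> kE (D J)) ->
  exists Bs, tower_ok Bs /\ (forall J, J \in Js -> Aff Bs J).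
Proof.
elim: Js => [|J Js IH] hJs; first by exists [::].
have [Bs [hBs hA]] : exists Bs, tower_ok Bs /\ (forall J, J \in Js -> Aff Bs J).
  by apply: IH => J' h; apply: hJs; rewrite in_cons h orbT.
have dJ : kE (D J) by apply: hJs; rewrite in_cons eqxx.
case: (classic (Etow Bs J)) => hJ.
  exists Bs; split => // J'; rewrite in_cons => /orP [/eqP -> | h]; last exact: hA.
  exact: structR_iter.
exists (J :: Bs); split => // J'; rewrite in_cons => /orP [/eqP -> | h]; last by apply: Aff_cons; apply: hA.
exists 1; split; first exact: (rs1 (df_rs hk)). rewrite mul1r subrr. apply: Aff_k. exact: (rs0 (df_rs hk)).
Qed.


Lemma alg_Aff Bs z : tower_ok Bs -> Aff Bs z -> alg kE z -> kE z.
Proof.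
elim: Bs z => [|Y Bs IH] z //=. case=> hBs hY nY [c [hc hw]] hz.
have [c0|cn0] := eqVneq c 0.
  by move: hw; rewrite c0 mul0r subr0 => hw; apply: IH.
exfalso. apply: nY.
have hE := Etow_df hBs. have R := df_rs hE. have PR := polyIn_rset R.
have hwE : Etow Bs (z - c * Y) := Aff_Etow hBs hw.
have hcE : Etow Bs c := Etow_k hBs hc.
case: hz => p [p0 hp pz].
apply: (O1 hE (Etow_k hBs hY)).
exists (p \Po (c *: ('X + ((z - c * Y) / c)%:P))); split.
- rewrite -size_poly_eq0 size_comp_poly2 ?size_poly_eq0 //. by rewrite size_scale // size_XaddC.
- apply: (polyIn_comp R).
    by apply: (polyIn_sub _ hp) => a ha; apply: Etow_k.
  apply: (polyInZ R) => //. apply: (rsD PR); first exact: (polyIn_X R). apply: (polyIn_C R).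
  apply: (rsM R) => //. exact: (dfV hE).
- rewrite horner_comp hornerZ hornerD hornerX hornerC.
  have -> : c * (Y + (z - c * Y) / c) = z by field.
  done.
Qed.


Lemma final Bs f g (P : {poly {poly K}}) : tower_ok Bs -> Aff Bs f -> Aff Bs g -> P != 0 ->
  polyIn (polyIn kE) P -> (P.[g%:P]).[f] = 0 ->
  exists u v, [/\ kE u, kE v, (u != 0) || (v != 0) & kE (u * f + v * g)].
Proof.
move=> + + + P0 hP. have Rk := df_rs hk. elim: Bs f g => [|Y Bs IH] f g /=.
  move=> _ hf hg _. exists 1, 0; split; [exact: (rs1 Rk) | exact: (rs0 Rk) | by rewrite oner_eq0 |].
  by rewrite mul1r mul0r addr0.
case=> hBs hY nY [p [hp hA]] [q [hq hB]] hfg.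
have [/andP [/eqP p0 /eqP q0]|pq] := boolP ((p == 0) && (q == 0)).
  apply: IH => //.
  - by move: hA; rewrite p0 mul0r subr0.
  - by move: hB; rewrite q0 mul0r subr0.
have hE := Etow_df hBs. have R := df_rs hE. have PR := polyIn_rset R.
have hAE := Aff_Etow hBs hA. have hBE := Aff_Etow hBs hB.
have hpE := Etow_k hBs hp. have hqE := Etow_k hBs hq.
set A := f - p * Y in hA hAE. set B := g - q * Y in hB hBE.
set L1 := A%:P + p *: 'X. set L2 := B%:P + q *: 'X.
have hL1 : polyIn (Etow Bs) L1.
  by apply: (rsD PR); [apply: (polyIn_C R) | apply: (polyInZ R) => //; apply: (polyIn_X R)].
have hL2 : polyIn (Etow Bs) L2.
  by apply: (rsD PR); [apply: (polyIn_C R) | apply: (polyInZ R) => //; apply: (polyIn_X R)].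
have ev1 t : L1.[t] = A + p * t by rewrite /L1 hornerD hornerC hornerZ hornerX.
have ev2 t : L2.[t] = B + q * t by rewrite /L2 hornerD hornerC hornerZ hornerX.
set Phi := (map_poly (comp_poly L1) P).[L2].
have hPhi : polyIn (Etow Bs) Phi.
  apply: (polyIn_horner PR) => //.
  apply: (@polyIn_map _ _ (polyIn kE) (polyIn (Etow Bs)) (comp_poly L1) P) => //; first exact: comp_poly0.
  move=> c hc. apply: (polyIn_comp R) => //. by apply: (polyIn_sub _ hc) => a ha; apply: Etow_k.
have PhiY : Phi.[Y] = 0 by rewrite /Phi evalPhi ev1 ev2 /A /B !subrK.
have Phi0 := transc hE (Etow_k hBs hY) nY hPhi PhiY.
have allt t : (P.[(B + q * t)%:P]).[A + p * t] = 0.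
  by have := congr1 (horner^~ t) Phi0; rewrite /= -/Phi evalPhi ev1 ev2 horner0.
case: (eqVneq p 0) => [p0|pn0].
  have qn0 : q != 0 by move: pq; rewrite p0 eqxx.
  have [n hn] := exists_n_horner P0.
  have hS : (P.[(n%:R)%:P]).[A] = 0.
    have := allt ((n%:R - B) / q). rewrite p0 mul0r addr0.
    have -> : B + q * ((n%:R - B) / q) = n%:R by field.
    done.
  have kA : kE A.
    apply: (alg_Aff hBs hA). exists (P.[(n%:R)%:P]); split => //.
    apply: (polyIn_horner (polyIn_rset Rk)) => //. apply: (polyIn_C Rk). exact: (rs_nat Rk).
  exists 1, 0; split; [exact: (rs1 Rk) | exact: (rs0 Rk) | by rewrite oner_eq0 |].
  by rewrite mul1r mul0r addr0; move: kA; rewrite /A p0 mul0r subr0.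
set lam := q / p. set mu := B - lam * A.
have hlam : kE lam by apply: (rsM Rk) => //; apply: (dfV hk).
have [n hn] := exists_n_map P0. set Pn := map_poly (horner_eval n%:R) P.
have hPn : Pn.[lam * n%:R + mu] = 0.
  rewrite -eval2. have := allt ((n%:R - A) / p).
  have -> : A + p * ((n%:R - A) / p) = n%:R by field.
  have -> : B + q * ((n%:R - A) / p) = lam * n%:R + mu by rewrite /mu /lam; field.
  done.
have kmu : kE mu.
  apply: (alg_Aff hBs); first by apply: Aff_B => //; apply: Aff_M.
  exists (Pn \Po ('X + (lam * n%:R)%:P)); split.
  - rewrite -size_poly_eq0 size_comp_poly2 ?size_poly_eq0 //. exact: size_XaddC.
  - apply: (polyIn_comp Rk).
      apply: (@polyIn_map _ _ (polyIn kE) kE (horner_eval n%:R) P) => //.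
        by rewrite /horner_eval horner0.
      move=> c hc. apply: (polyIn_horner Rk) => //. exact: (rs_nat Rk).
    apply: (rsD (polyIn_rset Rk)); first exact: (polyIn_X Rk). apply: (polyIn_C Rk).
    apply: (rsM Rk) => //. exact: (rs_nat Rk).
  - by rewrite horner_comp hornerD hornerX hornerC addrC.
exists (- lam), 1; split; [exact: (rsN Rk) | exact: (rs1 Rk) | by rewrite oner_eq0 orbT |].
have -> : - lam * f + 1 * g = mu by rewrite /mu /A /B /lam; field.
done.
Qed.

End Tower.


Section Cauchy.
Variable kE : K -> Prop.
Hypothesis hk : dfield kE.
Variable x : K.
Hypothesis hx : kE x.
Hypothesis hx' : D x = 1.

Lemma D_term c j J : D c = 0 ->
  D (c / j.+1%:R * x ^+ j.+1 * J) = c * x ^+ j * J + c / j.+1%:R * x ^+ j.+1 * D J.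
Proof.
move=> dc. have dcj : D (c / j.+1%:R) = 0.
  by rewrite DMc ?dc ?mul0r // DV ?natr_neq0 // Dnat oppr0 mul0r.
rewrite DM DM dcj DX hx' mul0r add0r mulr1. field. by rewrite nat1r natr_neq0.
Qed.

Lemma cauchy m f : kE (iter m D f) ->
  exists L : seq (K * nat * K), (forall t, t \in L -> D t.1.1 = 0 /\ kE (D t.2)) /\
    f = \sum_(t <- L) t.1.1 * x ^+ t.1.2 * t.2.
Proof.
have Rk := df_rs hk.
elim: m f => [|m IH] f /= hf.
  exists [:: (1, 0%N, f)]; split.
    by move=> t; rewrite inE => /eqP -> /=; split; [exact: D1 | exact: (dfDer hk)].
  by rewrite big_cons big_nil expr0 !mul1r addr0.
have hDf : kE (iter m D (D f)) by rewrite -iterSr.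
have [L [hL eL]] := IH (D f) hDf.
set F := \sum_(t <- L) t.1.1 / t.1.2.+1%:R * x ^+ t.1.2.+1 * t.2.
have dF : D F = D f + \sum_(t <- L) t.1.1 / t.1.2.+1%:R * x ^+ t.1.2.+1 * D t.2.
  rewrite /F Dsum eL -big_split /=. apply: eq_big_seq => t ht.
  by apply: D_term; case: (hL t ht).
exists ((1, 0%N, f - F) :: [seq (t.1.1 / t.1.2.+1%:R, t.1.2.+1, t.2) | t <- L]); split.
  move=> t; rewrite inE => /orP [/eqP -> | /mapP [s hs ->]] /=.
  - split; first exact: D1. rewrite DB dF opprD addrA subrr add0r.
    apply: (rsN Rk). rewrite big_seq. apply: (rs_sum Rk) => s hs.
    have [ds dJ] := hL s hs.
    apply: (rsM Rk) => //. apply: (rsM Rk); last exact: (rs_exp Rk).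
    apply: (dfC hk). by rewrite DMc ?ds ?mul0r // DV ?natr_neq0 // Dnat oppr0 mul0r.
  - have [ds hs'] := hL s hs. split => //.
    by rewrite DMc ?ds ?mul0r // DV ?natr_neq0 // Dnat oppr0 mul0r.
rewrite big_cons big_map /= expr0 !mul1r. by rewrite /F subrK.
Qed.

End Cauchy.

End Deriv.

Unset Implicit Arguments.
Set Strict Implicit.

Theorem corollary32 (K : fieldType) (D : K -> K) (k : pred K)
  (hD : is_derivation D) (hchar : char0 K)
  (hk : is_diff_subfield D k)
  (hconst : forall c : K, is_const D c -> c \in k)
  (hC : consts_alg_closed D)
  (x : K) (hx : x \in k) (hx' : D x = 1)
  (f g : K) (hf : iterated_integral D k f) (hg : iterated_integral D k g)
  (hdep : alg_dependent2 k f g) :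
  exists u v : K, [/\ u \in k, v \in k, (u != 0) || (v != 0) & u * f + v * g \in k].
Proof.
pose kE := fun z => z \in k.
have hkE : dfield D kE.
  case: hk => [[h0 h1 hadd] [hneg hmul hinv hder]].
  split; [by split | exact: hinv | exact: hder | exact: hconst].
have Rk := df_rs hkE.
case: hf => m hm. case: hg => n hn.
have [Lf [hLf eLf]] := cauchy hD hchar hkE (x:=x) hx hx' hm.
have [Lg [hLg eLg]] := cauchy hD hchar hkE (x:=x) hx hx' hn.
set Js := [seq t.2 | t <- Lf ++ Lg].
have [Bs [hBs hA]] : exists Bs, tower_ok D kE Bs /\ (forall J, J \in Js -> Aff kE Bs J).
  apply: (clean hD hchar hkE) => J /mapP [t ht ->].
  by move: ht; rewrite mem_cat => /orP [h | h]; [case: (hLf t h) | case: (hLg t h)].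
have affL (L : seq (K * nat * K)) : (forall t, t \in L -> D t.1.1 = 0 /\ kE (D t.2)) ->
    {subset L <= Lf ++ Lg} -> Aff kE Bs (\sum_(t <- L) t.1.1 * x ^+ t.1.2 * t.2).
  move=> hL sub. rewrite big_seq. apply: (big_ind (Aff kE Bs)).
  - apply: (Aff_k hkE Bs). exact: (rs0 Rk).
  - exact: (Aff_D hkE).
  - move=> t ht. apply: (Aff_M hkE).
      apply: (rsM Rk); last exact: (rs_exp Rk). apply: (dfC hkE). by case: (hL t ht).
    apply: hA. apply/mapP. exists t => //. exact: sub.
have Af : Aff kE Bs f.
  rewrite eLf. apply: affL; first exact: hLf. by move=> t ht; rewrite mem_cat ht.
have Ag : Aff kE Bs g.
  rewrite eLg. apply: affL; first exact: hLg. by move=> t ht; rewrite mem_cat ht orbT.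
case: hdep => P [P0 hP ev].
exact: (final hD hchar hkE hBs Af Ag P0 (fun i j => hP i j) ev).
Qed.
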